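(* Let $S$ be a finite relational signature and let $R$ be a relational Bayesian network (RBN) over $S$ that contains no combination functions, i.e. for each $r/k\in S$ its probability formula $F_r(X_1,\ldots,X_k)$ is built only from constants $q\in[0,1]$, atoms $s(Y_1,\ldots,Y_l)$ with $s/l\in S$ and each $Y_j\in\{X_1,\ldots,X_k\}$, and convex combinations $F_1\cdot F_2+(1-F_1)\cdot F_3$; and suppose $R$ is acyclic for every domain size. Then the family $\{Q^{(n)}\mid n\in\mathbb{N}\}$ of distributions defined by $R$ is a projective random relational structure model.
   Context: A relational signature $S$ is a set of relation symbols with arities, written $r/k$ ($k\geq 0$). For $n\in\mathbb{N}$ let $[n]=\{0,\ldots,n-1\}$ and let $\Omega^{(n)}$ be the set of all possible worlds for $S$ over domain $[n]$, i.e. truth assignments to all ground atoms $r(\mathbf{i})$ with $r/k\in S$, $\mathbf{i}\in[n]^k$. A random relational structure model (RRSM) is a family $\{Q^{(n)}\mid n\in\mathbb{N}\}$ with $Q^{(n)}$ a probability distribution on $\Omega^{(n)}$. $Q^{(n)}$ is exchangeable if $Q^{(n)}(\omega)=Q^{(n)}(\omega')$ whenever $\omega,\omega'$ are isomorphic. For $m\le n$, $Q^{(n)}\downarrow[m]$ denotes the marginal distribution of $Q^{(n)}$ on the ground atoms $r(\mathbf{i})$ with $\mathbf{i}\in[m]^k$ (identified with a distribution on $\Omega^{(m)}$). An RRSM is projective if every $Q^{(n)}$ is exchangeable and $Q^{(n)}\downarrow[m]=Q^{(m)}$ for all $m<n$. RBN semantics (combination-function-free fragment): an RBN assigns to each $r/k\in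 S$ a probability formula $F_r(X_1,\ldots,X_k)$ in distinct variables $X_1,\ldots,X_k$, built as described in the claim. For a domain $[n]$ and $\mathbf{i}\in[n]^k$, substituting $\mathbf{i}$ for $(X_1,\ldots,X_k)$ gives a ground formula $F_r(\mathbf{i})$ whose value in $[0,1]$ is computed in a world $\omega$ by: a constant evaluates to itself, a ground atom evaluates to $1$ if true in $\omega$ and $0$ otherwise, and $F_1F_2+(1-F_1)F_3$ is evaluated arithmetically. The parents of $r(\mathbf{i})$ are the ground atoms occurring in $F_r(\mathbf{i})$. The RBN is acyclic if for every $n$ this parent relation on ground atoms over $[n]$ is acyclic. Then $Q^{(n)}(\omega)=\prod_{r/k\in S}\prod_{\mathbf{i}\in[n]^k} p_{r,\mathbf{i}}(\omega)$, where $p_{r,\mathbf{i}}(\omega)$ is the value of $F_r(\mathbf{i})$ in $\omega$ if $r(\mathbf{i})$ is true in $\omega$ and one minus this value otherwise (i.e. $Q^{(n)}$ is the Bayesian network on the ground atoms with these parents and conditional probabilities). *)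

(* Defs.v *)
From mathcomp Require Import all_boot all_order all_algebra.
From mathcomp Require Import fingroup perm reals.
Set Implicit Arguments. Unset Strict Implicit. Unset Printing Implicit Defensive.
Import Order.TTheory GRing.Theory Num.Theory.
Local Open Scope ring_scope.

Section RBN.
Variable R : realType.
Variables (Rel : finType) (ar : Rel -> nat).

Inductive pform (k : nat) : Type :=
| PConst of R
| PAtom (s : Rel) of (ar s).-tuple 'I_k
| PComb of pform k & pform k & pform k.

Definition atom (n : nat) := {r : Rel & (ar r).-tuple 'I_n}.
Definition world (n : nat) := {ffun atom n -> bool}.

Fixpoint consts_ok k (F : pform k) : bool :=
  match F with
  | PConst q => (0 <= q) && (q <= 1)
  | PAtom _ _ => true
  | PComb F1 F2 F3 => [&& consts_ok F1, consts_ok F2 & consts_ok F3]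
  end.

Definition subst_atom n k (s : Rel) (a : (ar s).-tuple 'I_k) (i : k.-tuple 'I_n)
  : atom n := existT _ s [tuple tnth i (tnth a j) | j < ar s].

Fixpoint gval n k (F : pform k) (i : k.-tuple 'I_n) (w : world n) : R :=
  match F with
  | PConst q => q
  | PAtom s a => if w (subst_atom a i) then 1 else 0
  | PComb F1 F2 F3 => gval F1 i w * gval F2 i w + (1 - gval F1 i w) * gval F3 i w
  end.

Fixpoint gatoms n k (F : pform k) (i : k.-tuple 'I_n) : seq (atom n) :=
  match F with
  | PConst _ => [::]
  | PAtom s a => [:: subst_atom a i]
  | PComb F1 F2 F3 => gatoms F1 i ++ gatoms F2 i ++ gatoms F3 i
  end.

Section Net.
Variable F : forall r : Rel, pform (ar r).

(* b is a parent of a *)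
Definition rbn_parent n (a b : atom n) : bool := b \in gatoms (F (tag a)) (tagged a).

Definition rbn_acyclic : Prop :=
  forall n (a b : atom n), rbn_parent a b -> ~~ connect (@rbn_parent n) b a.

Definition rbn_Q n (w : world n) : R :=
  \prod_(a : atom n)
    (if w a then gval (F (tag a)) (tagged a) w else 1 - gval (F (tag a)) (tagged a) w).
End Net.

Definition is_distr n (P : world n -> R) : Prop :=
  (forall w, 0 <= P w) /\ \sum_(w : world n) P w = 1.

Definition atom_perm n (s : {perm 'I_n}) (a : atom n) : atom n :=
  existT _ (tag a) [tuple s (tnth (tagged a) j) | j < ar (tag a)].

(* the world isomorphic to w via s: w'(r(s i)) = w(r(i)) *)
Definition perm_world n (s : {perm 'I_n}) (w : world n) : world n :=
  [ffun a => w (atom_perm (s^-1)%g a)].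

Definition exchangeable n (P : world n -> R) : Prop :=
  forall (s : {perm 'I_n}) (w : world n), P (perm_world s w) = P w.

Definition atom_widen m n (H : (m <= n)%N) (a : atom m) : atom n :=
  existT _ (tag a) [tuple widen_ord H (tnth (tagged a) j) | j < ar (tag a)].

Definition restrict m n (H : (m <= n)%N) (w : world n) : world m :=
  [ffun a => w (atom_widen H a)].

Definition projective (Q : forall n, world n -> R) : Prop :=
  [/\ forall n, is_distr (Q n),
      forall n, exchangeable (Q n) &
      forall m n (H : (m < n)%N) (wm : world m),
        \sum_(w : world n | restrict (ltnW H) w == wm) Q n w = Q m wm].
End RBN.

(* Main.v *)
Require Import Defs.
From mathcomp Require Import all_boot all_order all_algebra.
From mathcomp Require Import fingroup perm reals.
From Stdlib Require Import Eqdep_dec.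
Set Implicit Arguments. Unset Strict Implicit. Unset Printing Implicit Defensive.
Import Order.TTheory GRing.Theory Num.Theory.
Local Open Scope ring_scope.

Section BN.
Variable R : realType.
Variables (A : finType) (par : rel A) (rank : A -> nat) (p : A -> {ffun A -> bool} -> R).
Hypothesis Hrank : forall a b, par a b -> (rank a < rank b)%N.
Hypothesis Hloc : forall a (w w' : {ffun A -> bool}), (forall b, par a b -> w b = w' b) -> p a w = p a w'.

Definition fac a (w : {ffun A -> bool}) := if w a then p a w else 1 - p a w.
Definition upd (w : {ffun A -> bool}) b x : {ffun A -> bool} :=
  [ffun c => if c == b then x else w c].

Lemma bn_sum1_0 (w0 : {ffun A -> bool}) :
  \sum_(w : {ffun A -> bool} | [forall a in ~: set0, w a == w0 a])
     \prod_(a in (set0 : {set A})) fac a w = 1.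
Proof.
rewrite (eq_bigl (pred1 w0)) ?big_pred1_eq ?big_set0 // => w /=.
apply/forallP/eqP => [h | ->]; last by move=> a; rewrite eqxx implybT.
apply/ffunP => a; move: (h a); rewrite in_setC in_set0 /=; exact: eqP.
Qed.

Lemma bn_sum1 k : forall (X : {set A}) (w0 : {ffun A -> bool}), (#|X| <= k)%N ->
  \sum_(w : {ffun A -> bool} | [forall a in ~: X, w a == w0 a])
     \prod_(a in X) fac a w = 1.
Proof.
elim: k => [|k IH] X w0 hX.
  have -> : X = set0 by apply/eqP; rewrite -cards_eq0 -leqn0.
  exact: bn_sum1_0.
case: (set_0Vmem X) => [->|[b0 hb0]]; first exact: bn_sum1_0.
have [b hbX hmin] : exists2 b, b \in X & forall a, a \in X -> ~~ par a b.
  case: (arg_minnP rank hb0) => b hb hm; exists b => // a ha; apply/negP => /Hrank.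
  by rewrite ltnNge hm.
set X' := X :\ b.
have hX' : (#|X'| <= k)%N by move: hX; rewrite (cardsD1 b X) hbX.
have E : forall x, \sum_(w : {ffun A -> bool} | [forall a in ~: X, w a == w0 a] && (w b == x))
     \prod_(a in X) fac a w =
   \sum_(w : {ffun A -> bool} | [forall a in ~: X', w a == w0 a]) \prod_(a in X) fac a (upd w b x).
  move=> x.
  rewrite (reindex_onto (fun w => upd w b x) (fun w => upd w b (w0 b))) /=; last first.
    move=> w /andP [_ /eqP hw]; apply/ffunP => a; rewrite !ffunE.
    by case: eqP => // ->.
  apply: eq_bigl => w; apply/idP/idP.
    move=> /andP [/andP [hP _] /eqP hw].
    apply/forallP => a; apply/implyP; rewrite !inE negb_and negbK => /orP [/eqP ->|haX].
      by rewrite -hw ffunE eqxx.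
    have := forallP hP a; rewrite inE haX /= ffunE.
    by case: (a =P b) => // Eab; rewrite Eab hbX in haX.
  move=> hP'.
  have wb : w b = w0 b.
    by apply/eqP; have := forallP hP' b; rewrite !inE eqxx.
  apply/andP; split; first (apply/andP; split).
  - apply/forallP => a; apply/implyP; rewrite inE => haX; rewrite ffunE.
    case: (a =P b) => [Eab|_]; first by rewrite Eab hbX in haX.
    by have := forallP hP' a; rewrite !inE negb_and haX orbT.
  - by rewrite ffunE eqxx.
  - apply/eqP/ffunP => a; rewrite !ffunE; case: eqP => // ->; by rewrite wb.
rewrite (bigID (fun w : {ffun A -> bool} => w b)) /=.
rewrite [X in X + _](eq_bigl (fun w : {ffun A -> bool} => [forall a in ~: X, w a == w0 a] && (w b == true))); last first.
  by move=> w; case: (w b); rewrite ?andbT ?andbF.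
rewrite [X in _ + X](eq_bigl (fun w : {ffun A -> bool} => [forall a in ~: X, w a == w0 a] && (w b == false))); last first.
  by move=> w; case: (w b); rewrite ?andbT ?andbF.
rewrite !E -big_split /= -[RHS](IH X' w0 hX').
apply: eq_bigr => w _.
have hrest : forall x, \prod_(a in X | a != b) fac a (upd w b x) = \prod_(a in X') fac a w.
  move=> x; rewrite [RHS](eq_bigl (fun a => (a \in X) && (a != b))); last first.
    by move=> a; rewrite !inE andbC.
  apply: eq_bigr => a /andP [haX hab].
  rewrite /fac ffunE (negbTE hab) (@Hloc a _ w) // => c hc; rewrite ffunE.
  case: eqP => // Ec; rewrite Ec in hc; by have := hmin a haX; rewrite hc.
have hb : forall x, fac b (upd w b x) = if x then p b w else 1 - p b w.
  move=> x; rewrite /fac ffunE eqxx (@Hloc b _ w) // => c hc; rewrite ffunE.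
  case: eqP => // Ec; rewrite Ec in hc; have := Hrank hc; by rewrite ltnn.
rewrite !(bigD1 b hbX) /= !hrest !hb.
by rewrite -mulrDl addrC subrK mul1r.
Qed.
End BN.


Section Main.
Variables (R : realType) (Rel : finType) (ar : Rel -> nat).

Lemma gval_local n k (G : pform R ar k) (i : k.-tuple 'I_n) (w w' : world ar n) :
  (forall b, b \in gatoms G i -> w b = w' b) -> Defs.gval G i w = Defs.gval G i w'.
Proof.
elim: G => [q|s a|G1 IH1 G2 IH2 G3 IH3] /= h //.
  by rewrite h // mem_seq1.
rewrite IH1 ?IH2 ?IH3 // => b hb; apply: h; rewrite !mem_cat hb ?orbT //.
Qed.

Lemma gval_01 n k (G : pform R ar k) (i : k.-tuple 'I_n) (w : world ar n) :
  consts_ok G -> 0 <= Defs.gval G i w <= 1.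
Proof.
elim: G => [q|s a|G1 IH1 G2 IH2 G3 IH3] /=; first by [].
  by case: (w _); rewrite ?lexx ?ler01.
case/and3P => /IH1 /andP [h1 h1'] /IH2 /andP [h2 h2'] /IH3 /andP [h3 h3'].
set x := Defs.gval G1 i w in h1 h1' *.
set y := Defs.gval G2 i w in h2 h2' *.
set z := Defs.gval G3 i w in h3 h3' *.
have hx : 0 <= 1 - x by rewrite subr_ge0.
apply/andP; split.
  by rewrite addr_ge0 // mulr_ge0.
apply: (@le_trans _ _ (x * 1 + (1 - x) * 1)); last by rewrite !mulr1 addrC subrK.
by rewrite lerD // ler_wpM2l.
Qed.

Lemma gval_perm n k (G : pform R ar k) (i : k.-tuple 'I_n) (w : world ar n) (s : {perm 'I_n}) :
  Defs.gval G [tuple s (tnth i j) | j < k] (perm_world s w) = Defs.gval G i w.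
Proof.
elim: G => [q|r a|G1 IH1 G2 IH2 G3 IH3] /=; first by [].
  rewrite ffunE; congr (if w _ then _ else _).
  rewrite /atom_perm /subst_atom /=; congr existT.
  by apply: eq_from_tnth => j; rewrite !tnth_mktuple permK.
by rewrite IH1 IH2 IH3.
Qed.

Lemma gval_widen m n (H : (m <= n)%N) k (G : pform R ar k) (i : k.-tuple 'I_m) (w : world ar n) :
  Defs.gval G [tuple widen_ord H (tnth i j) | j < k] w = Defs.gval G i (restrict H w).
Proof.
elim: G => [q|r a|G1 IH1 G2 IH2 G3 IH3] /=; first by [].
  rewrite ffunE; congr (if w _ then _ else _).
  rewrite /atom_widen /subst_atom /=; congr existT.
  by apply: eq_from_tnth => j; rewrite !tnth_mktuple.
by rewrite IH1 IH2 IH3.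
Qed.

Lemma atom_permK n (s : {perm 'I_n}) : cancel (@atom_perm _ ar n s) (atom_perm s^-1).
Proof.
move=> [r t]; rewrite /atom_perm /=; congr existT.
by apply: eq_from_tnth => j; rewrite !tnth_mktuple permK.
Qed.

Lemma atom_permKV n (s : {perm 'I_n}) : cancel (@atom_perm _ ar n s^-1) (atom_perm s).
Proof.
move=> [r t]; rewrite /atom_perm /=; congr existT.
by apply: eq_from_tnth => j; rewrite !tnth_mktuple permKV.
Qed.

Lemma atom_widen_inj m n (H : (m <= n)%N) : injective (@atom_widen _ ar m n H).
Proof.
move=> [r t] [r' t'] E.
have Er : r = r' := congr1 tag E.
subst r'.
have E' := inj_pair2_eq_dec Rel (@eq_comparable Rel) _ _ _ _ E.
congr existT; apply: eq_from_tnth => j.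
have := congr1 (fun t => tnth t j) E'; rewrite /= !tnth_mktuple.
by move/(congr1 (@nat_of_ord n)) => /= /val_inj.
Qed.
End Main.

Theorem mainTheorem1 (R : realType) (Rel : finType) (ar : Rel -> nat)
    (F : forall r : Rel, pform R ar (ar r)) :
  (forall r, consts_ok (F r)) ->
  rbn_acyclic F ->
  projective (rbn_Q F).
Proof.
move=> Hc Hac.
pose p n (a : atom ar n) (w : world ar n) := Defs.gval (F (tag a)) (tagged a) w.
pose rank n (a : atom ar n) := #|[set c | connect (@rbn_parent _ _ _ F n) c a]|.
have Hrank : forall n (a b : atom ar n), rbn_parent F a b -> (rank n a < rank n b)%N.
  move=> n a b hab; apply: proper_card; apply/properP; split.
    apply/subsetP => c; rewrite !inE => hc; exact: connect_trans hc (connect1 hab).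
  by exists b; rewrite !inE ?connect0 // (negbTE (Hac n a b hab)).
have Hloc : forall n (a : atom ar n) (w w' : world ar n),
    (forall b, rbn_parent F a b -> w b = w' b) -> p n a w = p n a w'.
  move=> n a w w' h; exact: gval_local.
have QE : forall n (w : world ar n), rbn_Q F w = \prod_(a : atom ar n) fac (p n) a w.
  by [].
have S1 := fun n => bn_sum1 (@Hrank n) (@Hloc n).
split.
- move=> n; split.
    move=> w; apply: prodr_ge0 => a _.
    have /andP [h0 h1] := gval_01 (tagged a) w (Hc (tag a)).
    by case: (w a); rewrite ?subr_ge0.
  rewrite -[RHS](S1 n #|[set: atom ar n]| setT [ffun=> false] (leqnn _)).
  apply: eq_big => [w|w _]; last by apply: eq_bigl => a; rewrite inE.
  by apply/esym/forallP => a; rewrite !inE.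
- move=> n s w; rewrite /rbn_Q (reindex (atom_perm s)); last first.
    by exists (atom_perm s^-1) => a _; [apply: atom_permK | apply: atom_permKV].
  apply: eq_bigr => a _ /=; rewrite ffunE atom_permK gval_perm //.
- move=> m n H wm.
  set H' := ltnW H.
  set Y := [set atom_widen H' x | x in [set: atom ar m]].
  pose w0 : world ar n := [ffun a => [exists a', (atom_widen H' a' == a) && wm a']].
  have hw0 : forall a', w0 (atom_widen H' a') = wm a'.
    move=> a'; rewrite ffunE; apply/existsP/idP => [[a'' /andP [/eqP /atom_widen_inj -> //]]|h].
    by exists a'; rewrite eqxx.
  rewrite (eq_bigr (fun w => rbn_Q F wm * \prod_(a in ~: Y) fac (p n) a w)); last first.
    move=> w /eqP hr; rewrite QE (bigID (fun a => a \in Y)) /=.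
    congr (_ * _); last by apply: eq_bigl => a; rewrite inE.
    rewrite big_imset /=; last by move=> x y _ _; apply: atom_widen_inj.
    rewrite QE; apply: eq_big => [a|a _]; first by rewrite inE.
    rewrite /fac /p /= gval_widen hr.
    by rewrite -hr ffunE.
  rewrite -mulr_sumr -[RHS]mulr1; congr (_ * _).
  rewrite -[RHS](S1 n #|~: Y| (~: Y) w0 (leqnn _)); apply: eq_bigl => w.
  apply/eqP/forallP => [hr a | h].
    apply/implyP; rewrite setCK => /imsetP [a' _ ->].
    by rewrite hw0 -hr ffunE.
  apply/ffunP => a'; rewrite ffunE -hw0; apply/eqP.
  by have := h (atom_widen H' a'); rewrite setCK imset_f ?inE.
Qed.
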